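(* Let $n\ge 2$. For $k\in\mathbb{N}$ let $\bar c_k := c_k^{\mathrm{EH}}/\bigl(\bigl[\tfrac{k+n-1}{n}\bigr]\pi\bigr)$ be the normalized $k$-th Ekeland–Hofer capacity on ellipsoids in $\mathbb{R}^{2n}$. Then, as $k\to\infty$, $\bar c_k$ converges uniformly on ellipsoids to the normalized symplectic capacity $c_\infty$ given by $$c_\infty\bigl(E(a_1,\dots,a_n)\bigr)=\frac{n}{1/a_1+\dots+1/a_n},$$ in the sense that $$\sup\Bigl\{\bigl|\bar c_k\bigl(E(a_1,\dots,a_{n-1},1)\bigr)-c_\infty\bigl(E(a_1,\dots,a_{n-1},1)\bigr)\bigr| \;:\; 0<a_1\le\dots\le a_{n-1}\le 1\Bigr\}\longrightarrow 0 \quad (k\to\infty).$$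
   Context: For $0<a_1\le\dots\le a_n\le\infty$, the ellipsoid is $E(a_1,\dots,a_n)=\{z\in\mathbb{C}^n : \sum_j |z_j|^2/a_j<1\}\subset\mathbb{R}^{2n}$ with the standard symplectic form. The Ekeland–Hofer capacities $c_1^{\mathrm{EH}}\le c_2^{\mathrm{EH}}\le\dots$ take the following values on ellipsoids: writing the numbers $m\,a_i\pi$ ($m\in\mathbb{N}$, $1\le i\le n$) in increasing order, with repetitions, as $d_1\le d_2\le\dots$, one has $c_k^{\mathrm{EH}}(E(a_1,\dots,a_n))=d_k$. $[x]$ denotes the largest integer $\le x$. A capacity is normalized if it takes the value $1$ on the unit ball $B^{2n}(1)=E(1,\dots,1)$. *)

(* Defs.v *)
From mathcomp Require Import all_boot all_order all_algebra.
From mathcomp Require Import all_classical all_reals all_analysis.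
Set Implicit Arguments. Unset Strict Implicit. Unset Printing Implicit Defensive.
Import Order.TTheory GRing.Theory Num.Theory.
Local Open Scope classical_set_scope.
Local Open Scope ring_scope.

(* An ellipsoid E(a_1,...,a_n) with finite positive parameters is encoded by
   its parameter vector a : 'I_n -> R. *)

(* ehCount a t = #{ (m,i) : m >= 1, 1 <= i <= n, m * a_i * pi <= t }
   (for t >= 0 and a_i > 0; the i-th summand is the number of m >= 1 with
   m <= t / (a_i pi), i.e. the truncation of t/(a_i pi)). *)
Definition ehCount {R : realType} (n : nat) (a : 'I_n -> R) (t : R) : nat :=
  (\sum_(i < n) Num.truncn (t / (a i * pi)))%N.

(* k-th Ekeland-Hofer capacity of E(a): the k-th term d_k (k >= 1) of the
   numbers m a_i pi (m >= 1) listed in increasing order with repetitions,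
   i.e. the smallest t such that at least k of these numbers are <= t. *)
Definition cEH {R : realType} (n : nat) (k : nat) (a : 'I_n -> R) : R :=
  inf [set t : R | (k <= ehCount a t)%N].

Definition cEHbar {R : realType} (n : nat) (k : nat) (a : 'I_n -> R) : R :=
  cEH k a / (((k + n - 1) %/ n)%N%:R * pi).

Definition cInf {R : realType} (n : nat) (a : 'I_n -> R) : R :=
  n%:R / (\sum_(i < n) (a i)^-1).

(* Main.v *)
Require Import Defs.
From mathcomp Require Import all_boot all_order all_algebra.
From mathcomp Require Import all_classical all_reals all_analysis.
From mathcomp Require Import ring lra zify.
Import Order.TTheory GRing.Theory Num.Theory.
Local Open Scope ring_scope.

Lemma cnt_le (R : realType) n (a : 'I_n -> R) (ha : forall i, 0 < a i) t :
  0 <= t -> (ehCount a t)%:R <= t / pi * \sum_i (a i)^-1.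
Proof.
move=> t0; rewrite /ehCount natr_sum mulr_sumr; apply: ler_sum => i _.
have -> : t / pi * (a i)^-1 = t / (a i * pi).
  by rewrite invfM mulrA mulrAC.
by rewrite truncn_le divr_ge0 // mulr_ge0 ?pi_ge0 // ltW.
Qed.

Lemma cnt_ge (R : realType) n (a : 'I_n -> R) (ha : forall i, 0 < a i) t :
  t / pi * \sum_i (a i)^-1 - n%:R <= (ehCount a t)%:R.
Proof.
rewrite lerBlDr /ehCount natr_sum mulr_sumr.
have -> : n%:R = \sum_(i < n) (1 : R) by rewrite sumr_const card_ord.
rewrite -big_split /=; apply: ler_sum => i _.
have -> : t / pi * (a i)^-1 = t / (a i * pi).
  by rewrite invfM mulrA mulrAC.
by rewrite natr1 ltW // truncnS_gt.
Qed.

Lemma cnt_neg (R : realType) n (a : 'I_n -> R) (ha : forall i, 0 < a i) t :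
  t < 0 -> ehCount a t = 0%N.
Proof.
move=> t0; rewrite /ehCount big1 // => i _.
apply/eqP; rewrite -leqn0 -(truncn0 R); apply: le_truncn.
by rewrite ltW // pmulr_llt0 // invr_gt0 mulr_gt0 ?pi_gt0.
Qed.
Lemma final (R : realType) (c s p m nn kk eps : R) : 0 < p -> 0 < s -> nn <= s -> 0 < m -> 0 < nn ->
  kk <= c / p * s -> c / p * s <= kk + nn -> kk <= nn * m -> nn * m <= kk + nn ->
  nn / eps < kk -> 0 < eps -> `|c / (m * p) - nn / s| <= eps.
Proof.
move=> p0 s0 ns m0 n0 h1 h2 h3 h4 h5 e0.
set u := c / p * s in h1 h2.
have -> : c / (m * p) - nn / s = (u - nn * m) / (s * m).
  rewrite /u; field; rewrite ?mulf_neq0 // ?gt_eqF //.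
have h6 : nn < kk * eps by rewrite -ltr_pdivrMr.
have em : 1 < eps * m.
  have : nn < nn * m * eps by apply: (lt_le_trans h6); rewrite ler_pM2r.
  by rewrite -mulrA -[X in X < _]mulr1 ltr_pM2l // mulrC.
rewrite normrM normfV (gtr0_norm (mulr_gt0 s0 m0)) ler_pdivrMr ?mulr_gt0 //.
have hd : `|u - nn * m| <= nn by rewrite ler_norml; apply/andP; split; lra.
apply: (le_trans hd); apply: (le_trans ns).
have : s * 1 <= s * (eps * m) by rewrite ler_pM2l // ltW.
by rewrite mulr1; lra.
Qed.

Lemma canc1 (R : realType) (p t s : R) : p != 0 -> s != 0 -> p * (t / p * s) / s = t.
Proof. by move=> hp hs; field; apply/andP. Qed.

Lemma canc2 (R : realType) (p t s : R) : p != 0 -> s != 0 -> p * t / s / p * s = t.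
Proof. by move=> hp hs; field; apply/andP. Qed.

Theorem mainTheorem1 (R : realType) (n : nat) (hn : (2 <= n)%N) :
  forall eps : R, 0 < eps ->
  exists K : nat, forall k : nat, (K <= k)%N ->
    forall a : 'I_n -> R,
      (forall i : 'I_n, 0 < a i) ->
      (forall i j : 'I_n, (i <= j)%N -> a i <= a j) ->
      (forall i : 'I_n, val i = n.-1 -> a i = 1) ->
      `| cEHbar k a - cInf a | <= eps.
Proof.
move=> eps e0; exists (Num.truncn (n%:R / eps)).+1 => k hk a ha hmon hlast.
have k1 : (1 <= k)%N by apply: leq_trans hk.
have hkR : n%:R / eps < k%:R.
  apply: (lt_le_trans (truncnS_gt _)); by rewrite ler_nat.
have p0 : (0 : R) < pi := pi_gt0 R.
have hn1 : (n.-1 < n)%N by rewrite prednK // (leq_trans _ hn).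
set s := \sum_(i < n) (a i)^-1.
have a1 : forall i, a i <= 1.
  move=> i; rewrite -(hlast (Ordinal hn1)) //; apply: hmon => /=.
  by rewrite -ltnS prednK ?ltn_ord // (leq_trans _ hn).
have ns : n%:R <= s.
  have -> : n%:R = \sum_(i < n) (1 : R) by rewrite sumr_const card_ord.
  apply: ler_sum => i _; rewrite invf_ge1 ?ha ?a1 //.
have n0 : (0 : R) < n%:R by rewrite ltr0n (leq_trans _ hn).
have s0 : 0 < s by apply: lt_le_trans ns.
set S := [set t : R | (k <= ehCount a t)%N]%classic.
have lbS : lbound S (pi * k%:R / s).
  move=> t; rewrite /S /= => Ht.
  have t0 : 0 <= t.
    rewrite leNgt; apply/negP => /(@cnt_neg _ _ _ ha t) H; move: Ht; rewrite H.
    by rewrite leqn0 => /eqP k0; rewrite k0 in k1.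
  have := @cnt_le _ _ _ ha t t0; rewrite -(ler_nat R) in Ht => H.
  have H2 := le_trans Ht H.
  rewrite -[leRHS](@canc1 _ pi t s) ?gt_eqF //.
  by rewrite ler_pM2r ?invr_gt0 // ler_pM2l.
set t1 := pi * (k + n)%:R / s.
have St1 : S t1.
  rewrite /S /=; rewrite -(ler_nat R); apply: le_trans (@cnt_ge _ _ _ ha t1).
  rewrite /t1 natrD canc2 ?gt_eqF //.
  lra.
have hlb : has_lbound S by exists (pi * k%:R / s).
have cle : cEH k a <= t1 by apply: ge_inf.
have cge : pi * k%:R / s <= cEH k a by apply: lb_le_inf => //; exists t1.
rewrite /cEHbar /cInf -/s.
set M := ((k + n - 1) %/ n)%N.
have hM1 : (k <= n * M)%N.
  rewrite /M; lia.
have hM2 : (n * M <= k + n)%N.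
  rewrite /M mulnC (leq_trans (leq_trunc_div _ _)) //. lia.
have M0 : (0 < M)%N.
  rewrite lt0n; apply/negP => /eqP M0; move: hM1; rewrite M0 muln0 leqn0 => /eqP k0.
  by rewrite k0 in k1.
have mono : forall x y : R, x <= y -> x / pi * s <= y / pi * s.
  by move=> x y hxy; rewrite ler_pM2r // ler_pM2r ?invr_gt0.
apply: (@final _ _ _ _ _ _ k%:R) => //.
- by rewrite ltr0n.
- by rewrite -[leLHS](@canc2 _ pi k%:R s) ?gt_eqF // mono.
- rewrite -natrD -[leRHS](@canc2 _ pi (k + n)%:R s) ?gt_eqF // mono //.
- by rewrite -natrM ler_nat.
- by rewrite -natrM -natrD ler_nat.
Qed.
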